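(* Let $H = \{h_0 = 0_H, h_1, \dots, h_{t-1}\}$ be a finite abelian group with a fixed enumeration of its elements, and let $\boldsymbol{\lambda} = (\lambda_0,\dots,\lambda_{t-1})$ be a sequence of nonnegative integers. Suppose that every non-zero sum subset of type $\boldsymbol{\lambda}$ of $(\mathbb{Z} \times H) \setminus \{0_{\mathbb{Z}\times H}\}$ is sequenceable. Then for every $n \geq 2$, every non-zero sum subset of type $\boldsymbol{\lambda}$ of $(\mathbb{Z}^n \times H) \setminus \{0_{\mathbb{Z}^n\times H}\}$ is sequenceable.
   Context: For a finite subset $S$ of an abelian group with $|S| = k$, an ordering $(x_1,\dots,x_k)$ of $S$ has partial sums $(y_0,\dots,y_k)$ with $y_0 = 0$, $y_i = x_1+\cdots+x_i$. It is a sequencing if the $y_i$ are pairwise distinct, and a rotational sequencing if they are pairwise distinct except that $y_k = y_0 = 0$; $S$ is sequenceable if it has one or the other. $S$ is non-zero sum if the sum of its elements is nonzero. For an abelian group $G$ and a finite abelian group $H = \{h_0=0_H,\dots,h_{t-1}\}$, the type of a finite subset $S \subseteq G \times H$ is $(\lambda_0,\dots,\lambda_{t-1})$ where $\lambda_i$ is the number of elements of $S$ whose $H$-coordinate equals $h_i$. *)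

(* Defs.v *)
From HB Require Import structures.
From mathcomp Require Import all_boot all_order all_algebra.
Set Implicit Arguments. Unset Strict Implicit. Unset Printing Implicit Defensive.
Import GRing.Theory.
Local Open Scope ring_scope.

Section Seqs.
Variable G : zmodType.

Definition partial_sums (s : seq G) : seq G := 0 :: scanl +%R 0 s.

Definition is_sequencing (s : seq G) : bool := uniq (partial_sums s).

Definition is_rot_sequencing (s : seq G) : bool :=
  [&& (0 < size s)%N, nth 0 (partial_sums s) (size s) == 0
    & uniq (take (size s) (partial_sums s))].

(* A finite subset S (a duplicate-free list) is sequenceable if some
   ordering of it is a sequencing or a rotational sequencing. *)
Definition sequenceable (S : seq G) : Prop :=
  exists s : seq G, perm_eq s S /\ (is_sequencing s \/ is_rot_sequencing s).

Definition nonzero_sum (S : seq G) : bool := \sum_(x <- S) x != 0.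
End Seqs.

Definition has_type (G : zmodType) (H : zmodType) (t : nat)
  (h : 'I_t -> H) (lam : 'I_t -> nat) (S : seq (G * H)) : Prop :=
  forall i : 'I_t, count (fun x => x.2 == h i) S = lam i.

(* Main.v *)
Require Import Defs.
From HB Require Import structures.
From mathcomp Require Import all_boot all_order all_algebra.
Import GRing.Theory.
Local Open Scope ring_scope.

Section Aux.
Context {m : nat}.
Definition pv (d : 'rV[int]_m.+1) : {poly int} := \poly_(i < m.+1) d 0 (inord i).
Definition phi (c : int) (d : 'rV[int]_m.+1) : int := (pv d).[c].

Lemma pvD u w : pv (u + w) = pv u + pv w.
Proof.
apply/polyP => i; rewrite coefD !coef_poly; case: ltnP => _; rewrite ?mxE //.
Qed.
Lemma pvN u : pv (- u) = - pv u.
Proof.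
apply/polyP => i; rewrite coefN !coef_poly; case: ltnP => _; rewrite ?mxE ?oppr0 //.
Qed.
Lemma pv0 : pv 0 = 0.
Proof. apply/polyP => i; rewrite coef0 coef_poly; case: ltnP => _; rewrite ?mxE //. Qed.
Lemma pv_eq0 d : pv d = 0 -> d = 0.
Proof.
move=> H; apply/rowP => j; have := congr1 (fun p : {poly int} => p`_j) H.
by rewrite /= coef_poly ltn_ord inord_val coef0 mxE.
Qed.
Lemma phiD c u w : phi c (u + w) = phi c u + phi c w.
Proof. by rewrite /phi pvD hornerD. Qed.
Lemma phiB c u w : phi c (u - w) = phi c u - phi c w.
Proof. by rewrite /phi pvD pvN hornerD hornerN. Qed.
Lemma phi0 c : phi c 0 = 0.
Proof. by rewrite /phi pv0 horner0. Qed.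

Lemma exists_c (A : seq 'rV[int]_m.+1) :
  exists c, {in A &, forall u w, phi c u = phi c w -> u = w}.
Proof.
pose D := [seq d <- [seq u - w | u <- A, w <- A] | d != 0].
pose P := \prod_(d <- D) pv d.
have P0 : P != 0.
  rewrite prodf_seq_neq0; apply/allP => d; rewrite mem_filter => /andP[d0 _] /=.
  by apply/negP => /eqP/pv_eq0/eqP; apply/negP.
pose rs := [seq i%:Z | i <- iota 0 (size P)].
have : ~~ all (root P) rs.
  apply/negP => Hall.
  have := max_poly_roots P0 Hall.
  rewrite map_inj_uniq ?iota_uniq; last by move=> a b [].
  by rewrite size_map size_iota ltnn => /(_ isT).
case/allPn => c _ Hc; exists c => u w Hu Hw Huw.
apply/eqP; rewrite -subr_eq0; apply/negPn/negP => Hd.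
have HD : u - w \in D by rewrite mem_filter Hd (allpairs_f (fun a b => a - b) Hu Hw).
move: Hc; rewrite /root /P horner_prod prodf_seq_neq0 => /allP /(_ _ HD) /=.
by rewrite -/(phi c (u - w)) phiB Huw subrr eqxx.
Qed.
End Aux.
Lemma scanl_map (G1 G2 : zmodType) (f : G1 -> G2) (fD : forall a b, f (a + b) = f a + f b) s a :
  scanl +%R (f a) (map f s) = map f (scanl +%R a s).
Proof. by elim: s a => [|x s IH] a //=; rewrite -fD IH. Qed.

Lemma psums_map (G1 G2 : zmodType) (f : G1 -> G2) (fD : forall a b, f (a + b) = f a + f b)
  (f0 : f 0 = 0) s : partial_sums (map f s) = map f (partial_sums s).
Proof. by rewrite /partial_sums /= -f0 scanl_map. Qed.

Lemma last_scanl (G : zmodType) (s : seq G) a : last a (scanl +%R a s) = a + \sum_(x <- s) x.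
Proof.
elim: s a => [|x s IH] a /=; first by rewrite big_nil addr0.
by rewrite IH big_cons addrA.
Qed.

Lemma psums_last (G : zmodType) (s : seq G) :
  nth 0 (partial_sums s) (size s) = \sum_(x <- s) x.
Proof.
rewrite /partial_sums; have <- : size (scanl +%R 0 s) = size s by rewrite size_scanl.
by rewrite nth_last /= last_scanl add0r.
Qed.

Lemma main (H : finZmodType) (t : nat) (h : 'I_t -> H) (lam : 'I_t -> nat) :
  (forall S : seq (int * H),
      uniq S -> 0 \notin S -> nonzero_sum S -> has_type h lam S ->
      sequenceable S) ->
  forall m : nat,
  forall S : seq ('rV[int]_m.+1 * H),
      uniq S -> 0 \notin S -> nonzero_sum S -> has_type h lam S ->
      sequenceable S.
Proof.
move=> hyp m S uS nS sS tS.
pose sm := \sum_(x <- S) x.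
have [c Hc] := @exists_c m (0 :: sm.1 :: map fst S).
pose F (x : 'rV[int]_m.+1 * H) : int * H := (phi c x.1, x.2).
have FD a b : F (a + b) = F a + F b by rewrite /F /= phiD.
have F0 : F 0 = 0 by rewrite /F /= phi0.
have Fsum (r : seq ('rV[int]_m.+1 * H)) : F (\sum_(x <- r) x) = \sum_(x <- r) F x.
  by apply: (big_morph F FD F0).
have inA x : x \in S -> x.1 \in 0 :: sm.1 :: map fst S.
  by move=> xS; rewrite !inE map_f ?orbT.
have A0 : (0 : 'rV[int]_m.+1) \in 0 :: sm.1 :: map fst S by rewrite inE eqxx.
have Asm : sm.1 \in 0 :: sm.1 :: map fst S by rewrite !inE eqxx orbT.
have Fz x : x.1 \in 0 :: sm.1 :: map fst S -> F x = 0 -> x = 0.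
  case: x => a b /= xA [] ea ->; rewrite -(@phi0 m c) in ea.
  by rewrite (Hc _ _ xA A0 ea).
have Finj : {in S &, injective F}.
  move=> [a b] [a' b'] xS yS [] ea eb.
  by rewrite eb (Hc a a' (inA _ xS) (inA _ yS) ea).
pose S' := map F S.
have uS' : uniq S' by rewrite map_inj_in_uniq.
have nS' : 0 \notin S'.
  apply/mapP => [[x xS /esym /(Fz _ (inA _ xS)) x0]]; move: nS; by rewrite -x0 xS.
have sS' : nonzero_sum S'.
  rewrite /nonzero_sum big_map -Fsum; apply/eqP => /(Fz _ Asm) e.
  by move: sS; rewrite /nonzero_sum -/sm e eqxx.
have tS' : has_type h lam S' by move=> i; rewrite count_map; exact: tS i.
have [s' [ps' Hs']] := hyp S' uS' nS' sS' tS'.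
pose G y := nth 0 S (index y S').
have FG y : y \in S' -> F (G y) = y.
  move=> yS; rewrite /G -(nth_map 0 (F 0)) ?F0 ?nth_index //.
  by rewrite -(size_map F) index_mem.
have GF x : x \in S -> G (F x) = x.
  move=> xS; apply: Finj => //; last by rewrite FG // map_f.
  by rewrite /G; apply: mem_nth; rewrite -(size_map F) index_mem map_f.
have Fs : map F (map G s') = s'.
  rewrite -map_comp map_id_in // => y ys /=; apply: FG; by rewrite -(perm_mem ps').
exists (map G s'); split.
  have -> : S = map G S' by rewrite /S' -map_comp map_id_in // => x xS /=; rewrite GF.
  exact: perm_map.
case: Hs' => [Hu | /and3P [_ /eqP e _]].
  by left; rewrite /is_sequencing; apply: (@map_uniq _ _ F); rewrite -psums_map // Fs.
move: sS'; rewrite /nonzero_sum -(perm_big _ ps') -psums_last e eqxx //.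
Qed.

Theorem proposition4p3 (H : finZmodType) (t : nat) (h : 'I_t -> H)
  (h_bij : bijective h) (h_0 : forall i : 'I_t, nat_of_ord i = 0%N -> h i = 0)
  (lam : 'I_t -> nat) :
  (forall S : seq (int * H),
      uniq S -> 0 \notin S -> nonzero_sum S -> has_type h lam S ->
      sequenceable S) ->
  forall n : nat, (2 <= n)%N ->
  forall S : seq ('rV[int]_n * H),
      uniq S -> 0 \notin S -> nonzero_sum S -> has_type h lam S ->
      sequenceable S.
Proof.
move=> hyp [|m] // _; exact: main hyp m.
Qed.
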